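(* In the distributional optimal poisoning problem below, assume the loss is convex in the model parameters and the relevant loss minimizers exist and are unique. Suppose either (1) $\mathrm{supp}(\mu_c)\subseteq\mathcal{C}$; or (2) $\mathcal{H}=\{h_\theta\}$ is a convex hypothesis class and for every $h_\theta\in\mathcal{H}$ there exists a distribution $\mu$ with $\mathrm{supp}(\mu)\subseteq\mathcal{C}$ and $\frac{\partial}{\partial\theta}L(h_\theta;\mu)=0$. Then the optimal attack performance is achieved with poisoning ratio $\epsilon$: if $(\mu_p^*,\delta^* )$ is a distributional optimal poisoning pair, there exists a distribution $\mu_p^{(\epsilon)}$ with $\mathrm{supp}(\mu_p^{(\epsilon)})\subseteq\mathcal{C}$ such that $$\mathrm{Risk}\Big(\arg\min_{h\in\mathcal{H}}\{L(h;\mu_c)+\epsilon L(h;\mu_p^{(\epsilon)})\};\mu_c\Big)=\mathrm{Risk}\Big(\arg\min_{h\in\mathcal{H}}\{L(h;\mu_c)+\delta^* L(h;\mu_p^* )\};\mu_c\Big).$$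
   Context: $\mathcal{X}\subseteq\mathbb{R}^n$, $\mathcal{Y}=\{-1,+1\}$, $\mu_c$ the clean distribution on $\mathcal{X}\times\mathcal{Y}$, $\ell\ge 0$ the surrogate loss, $\mathrm{Risk}(h;\mu)=\Pr_{(x,y)\sim\mu}[h(x)\ne y]$, $L(h;\mu)=\mathbb{E}_{(x,y)\sim\mu}[\ell(h;x,y)]$, $\epsilon\ge0$ the poisoning budget, $\mathcal{C}\subseteq\mathcal{X}\times\mathcal{Y}$ the constraint set. Distributional optimal poisoning: $(\mu_p^*,\delta^* )\in\arg\max_{(\mu_p,\delta)}\mathrm{Risk}(h_p;\mu_c)$ subject to $\mathrm{supp}(\mu_p)\subseteq\mathcal{C}$ and $0\le\delta\le\epsilon$, where $h_p=\arg\min_{h\in\mathcal{H}}\{L(h;\mu_c)+\delta L(h;\mu_p)\}$. *)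

(* Defs.v *)
From mathcomp Require Import all_boot all_order all_algebra all_classical all_reals all_analysis.
Import numFieldNormedType.Exports.
Set Implicit Arguments. Unset Strict Implicit. Unset Printing Implicit Defensive.
Import Order.TTheory GRing.Theory Num.Theory.
Local Open Scope classical_set_scope.
Local Open Scope ring_scope.

(* Data space X x Y with X an arbitrary measurable space and Y = {-1,+1}
   encoded as bool (true = +1, false = -1).  Hypotheses are h_theta,
   indexed by parameters theta in a normed space V over R. *)
Section Poisoning.
Variables (R : realType) (d : measure_display) (X : measurableType d)
  (V : normedModType R).

Definition sample := (X * bool)%type.

Definition supported_in (mu : probability sample R) (C : set sample) : Prop :=
  mu.-negligible (~` C).

Definition Risk (h : V -> X -> bool) (theta : V) (mu : probability sample R)
  : \bar R := mu [set z : sample | h theta z.1 != z.2].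

Definition Lloss (loss : V -> sample -> R) (theta : V)
  (mu : probability sample R) : \bar R :=
  (\int[mu]_z (loss theta z)%:E)%E.

Definition pobj (loss : V -> sample -> R) (muc mup : probability sample R)
  (delta : R) (theta : V) : \bar R :=
  (Lloss loss theta muc + delta%:E * Lloss loss theta mup)%E.

Definition is_argmin (Theta : set V) (F : V -> \bar R) (theta : V) : Prop :=
  Theta theta /\ forall t, Theta t -> (F theta <= F t)%E.

Definition convex_param_set (Theta : set V) : Prop :=
  forall a b (t : R), Theta a -> Theta b -> 0 <= t <= 1 ->
    Theta (t *: a + (1 - t) *: b).

Definition loss_convex (loss : V -> sample -> R) : Prop :=
  forall z a b (t : R), 0 <= t <= 1 ->
    loss (t *: a + (1 - t) *: b) z <= t * loss a z + (1 - t) * loss b z.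

(* d/dtheta L(h_theta; mu) = 0 at theta (L finite under integrability) *)
Definition grad_zero (loss : V -> sample -> R) (mu : probability sample R)
  (theta : V) : Prop :=
  let f := fun t : V => fine (Lloss loss t mu) in
  differentiable f theta /\ ('d f theta : V -> R) = (fun _ => 0).

End Poisoning.

(* Main.v *)
Require Import Defs.
From mathcomp Require Import all_boot all_order all_algebra all_classical all_reals all_analysis.
Import numFieldNormedType.Exports.
Import Order.TTheory GRing.Theory Num.Theory.
Local Open Scope classical_set_scope.
Local Open Scope ring_scope.
From HB Require Import structures.
From mathcomp Require Import measurable_realfun lebesgue_integral.
From mathcomp Require Import ring lra.
Set Implicit Arguments. Unset Strict Implicit. Unset Printing Implicit Defensive.

Section pmix.
Context d (T : measurableType d) (R : realType).
Variables (P Q : probability T R) (a : R).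
Hypothesis a01 : 0 <= a <= 1.

Let a0 : 0 <= a. Proof. by case/andP: a01. Qed.
Let b0 : 0 <= 1 - a. Proof. by case/andP: a01 => _; rewrite subr_ge0. Qed.

Definition pmix : set T -> \bar R :=
  measure_add (mscale (NngNum a0) P) (mscale (NngNum b0) Q).

HB.instance Definition _ := Measure.on pmix.

Lemma pmixE A : pmix A = (a%:E * P A + (1 - a)%:E * Q A)%E.
Proof. by rewrite /pmix measure_addE. Qed.

Let pmix_setT : pmix setT = 1%E.
Proof.
rewrite pmixE.
have -> : P setT = 1%E by exact: probability_setT.
have -> : Q setT = 1%E by exact: probability_setT.
by rewrite !mule1 -EFinD addrC subrK.
Qed.

HB.instance Definition _ := Measure_isProbability.Build _ _ _ pmix pmix_setT.



Lemma ge0_integral_pmix (f : T -> \bar R) : measurable_fun setT f ->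
  (forall x, 0 <= f x)%E ->
  (\int[pmix]_x f x = a%:E * \int[P]_x f x + (1 - a)%:E * \int[Q]_x f x)%E.
Proof.
move=> mf f0; rewrite /pmix.
rewrite (ge0_integral_measure_add _ _ _ (fun x _ => f0 x) mf).
rewrite !ge0_integral_mscale //. all: try exact: measurableT.
Qed.

End pmix.

Lemma convex_min (R : realType) (V : normedModType R) (f : V -> R) (t0 th : V) :
  (forall a b (s : R), 0 <= s <= 1 ->
     f (s *: a + (1 - s) *: b) <= s * f a + (1 - s) * f b) ->
  differentiable f t0 -> ('d f t0 : V -> R) = (fun _ => 0) -> f t0 <= f th.
Proof.
move=> cvx df d0.
have D : 'D_(th - t0) f t0 = 0 by rewrite deriveE // d0.
have Hd := @diff_derivable _ _ _ f t0 (th - t0) df.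
move: Hd D; rewrite /derivable /derive.
set g := (fun h : R => h^-1 *: ((f \o shift t0) (h *: (th - t0)) - f t0)).
move=> Hd D.
have Hc : g @ 0^' --> 0 by rewrite -[X in _ --> X]D.
rewrite leNgt; apply/negP => lt.
set e := f t0 - f th; have e0 : 0 < e by rewrite subr_gt0.
have Hn := cvgr_dist_lt _ _ Hc _ e0.
have Hr : \forall h \near 0^'+, `|0 - g h| < e /\ 0 < h /\ h < 1.
{
  near=> h; split; last split.
  - near: h. apply: (@filterS _ (nbhs (0:R)) _ [set x | x != 0 -> `|0 - g x| < e]); last exact: Hn. by move=> x P x0; apply: P; rewrite gt_eqF.
  - by near: h; exact: nbhs_right_gt.
  - by near: h; exact: nbhs_right_lt.
Unshelve. all: end_near. }
have [h [H1 [h0 h1]]] := @filter_ex _ _ (at_right_proper_filter (0:R)) _ Hr.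
have eqv : h *: (th - t0) + t0 = h *: th + (1 - h) *: t0.
  by rewrite scalerBl scale1r scalerBr -addrA [- _ + t0]addrC.
have cv := cvx th t0 h (ltac:(by rewrite (ltW h0) (ltW h1))).
have gle : g h <= - e.
  rewrite /g /= eqv.
  change (h^-1 * (f (h *: th + (1 - h) *: t0) - f t0) <= - e).
  rewrite mulrC ler_pdivrMr //.
  rewrite /e; lra.
move: H1; rewrite sub0r normrN.
have : e <= `|g h|.
  by rewrite ler_normr lerNr gle orbT.
lra.
Qed.


Section helpers.
Context (R : realType) (d : measure_display) (X : measurableType d)
  (V : normedModType R) (loss : V -> sample X -> R).
Hypothesis loss0 : forall theta z, 0 <= loss theta z.

Definition Lr (mu : probability (sample X) R) (theta : V) : R :=
  fine (Lloss loss theta mu).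

Lemma LlossE (mu : probability (sample X) R) theta :
  mu.-integrable setT (fun z => (loss theta z)%:E) ->
  Lloss loss theta mu = (Lr mu theta)%:E.
Proof. by move=> hi; rewrite /Lr fineK //; exact: integrable_fin_num. Qed.

Lemma Lr_ge0 (mu : probability (sample X) R) theta : 0 <= Lr mu theta.
Proof. by rewrite /Lr fine_ge0 // integral_ge0 // => z _; rewrite lee_fin. Qed.

Lemma pobjE (muc mu : probability (sample X) R) delta theta :
  muc.-integrable setT (fun z => (loss theta z)%:E) ->
  mu.-integrable setT (fun z => (loss theta z)%:E) ->
  pobj loss muc mu delta theta = (Lr muc theta + delta * Lr mu theta)%:E.
Proof. by move=> h1 h2; rewrite /pobj (LlossE h1) (LlossE h2) -EFinM -EFinD. Qed.

Lemma Lr_pmix (P Q : probability (sample X) R) (a : R) (a01 : 0 <= a <= 1) theta :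
  P.-integrable setT (fun z => (loss theta z)%:E) ->
  Q.-integrable setT (fun z => (loss theta z)%:E) ->
  Lr (pmix P Q a01) theta = a * Lr P theta + (1 - a) * Lr Q theta.
Proof.
move=> h1 h2.
have mf : measurable_fun setT (fun z => (loss theta z)%:E).
  exact: measurable_int h1.
rewrite /Lr /Lloss ge0_integral_pmix //; last by move=> z; rewrite lee_fin.
rewrite -/(Lloss loss theta P) -/(Lloss loss theta Q).
by rewrite (LlossE h1) (LlossE h2) -!EFinM -EFinD.
Qed.

Lemma supported_pmix (P Q : probability (sample X) R) (a : R) (a01 : 0 <= a <= 1)
  (C : set (sample X)) :
  supported_in P C -> supported_in Q C -> supported_in (pmix P Q a01) C.
Proof.
move=> [N1 [mN1 P0 sN1]] [N2 [mN2 Q0 sN2]].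
exists (N1 `&` N2); split.
- exact: measurableI.
- transitivity (a%:E * P (N1 `&` N2) + (1 - a)%:E * Q (N1 `&` N2))%E; first exact: pmixE.
  have -> : P (N1 `&` N2) = 0%E.
    exact: (subset_measure0 (measurableI _ _ mN1 mN2) mN1 (@subIsetl _ N1 N2) P0).
  have -> : Q (N1 `&` N2) = 0%E.
    exact: (subset_measure0 (measurableI _ _ mN1 mN2) mN2 (@subIsetr _ N1 N2) Q0).
  by rewrite !mule0 adde0.
- by move=> z nz; split; [exact: sN1|exact: sN2].
Qed.

Lemma Lr_convex (mu : probability (sample X) R) :
  loss_convex loss ->
  (forall theta, mu.-integrable setT (fun z => (loss theta z)%:E)) ->
  forall a b (s : R), 0 <= s <= 1 ->
  Lr mu (s *: a + (1 - s) *: b) <= s * Lr mu a + (1 - s) * Lr mu b.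
Proof.
move=> lc hi a b s s01.
rewrite -lee_fin EFinD !EFinM -!LlossE //.
rewrite /Lloss.
have e : (fun z => (s * loss a z + (1 - s) * loss b z)%:E) =
    ((fun z => s%:E * (loss a z)%:E) \+ (fun z => (1 - s)%:E * (loss b z)%:E))%E.
  by apply/funext => z; rewrite /= EFinD !EFinM.
have i1 := integrableZl measurableT s (hi a).
have i2 := integrableZl measurableT (1 - s) (hi b).
have i12 : mu.-integrable setT (fun z => (s * loss a z + (1 - s) * loss b z)%:E).
  by rewrite e; exact: integrableD.
have L := le_integral measurableT (hi (s *: a + (1 - s) *: b)) i12
  (fun z _ => ltac:(by rewrite /= lee_fin; exact: lc)).
have E2 : (\int[mu]_z (s * loss a z + (1 - s) * loss b z)%:E =
   s%:E * \int[mu]_z (loss a z)%:E + (1 - s)%:E * \int[mu]_z (loss b z)%:E)%E.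
  by rewrite e integralD // integralZl // integralZl.
rewrite E2 in L; exact: L.
Qed.

End helpers.

Theorem theorem2 (R : realType) (d : measure_display) (X : measurableType d)
  (V : normedModType R)
  (h : V -> X -> bool) (Theta : set V)
  (loss : V -> sample X -> R)
  (muc : probability (sample X) R) (C : set (sample X)) (eps : R)
  (mup_star : probability (sample X) R) (delta_star : R) :
  (* standing assumptions *)
  0 <= eps ->
  (forall theta z, 0 <= loss theta z) ->
  loss_convex loss ->
  (forall theta, muc.-integrable setT (fun z => (loss theta z)%:E)) ->
  (forall (mu : probability (sample X) R) theta, supported_in mu C ->
     mu.-integrable setT (fun z => (loss theta z)%:E)) ->
  (* the relevant loss minimizers exist and are unique *)
  (forall (mu : probability (sample X) R) (delta : R),
     supported_in mu C -> 0 <= delta <= eps ->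
     (exists theta, is_argmin Theta (pobj loss muc mu delta) theta) /\
     (forall t1 t2, is_argmin Theta (pobj loss muc mu delta) t1 ->
                    is_argmin Theta (pobj loss muc mu delta) t2 -> t1 = t2)) ->
  (* (mup_star, delta_star) is a distributional optimal poisoning pair *)
  supported_in mup_star C -> 0 <= delta_star <= eps ->
  (forall (mu : probability (sample X) R) (delta : R) t t_star,
     supported_in mu C -> 0 <= delta <= eps ->
     is_argmin Theta (pobj loss muc mu delta) t ->
     is_argmin Theta (pobj loss muc mup_star delta_star) t_star ->
     (Risk h t muc <= Risk h t_star muc)%E) ->
  (* condition (1) or condition (2) *)
  (supported_in muc C \/
   (convex_param_set Theta /\
    forall theta, Theta theta ->
      exists mu : probability (sample X) R,
        supported_in mu C /\ grad_zero loss mu theta)) ->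
  exists mup_eps : probability (sample X) R,
    supported_in mup_eps C /\
    forall t t_star,
      is_argmin Theta (pobj loss muc mup_eps eps) t ->
      is_argmin Theta (pobj loss muc mup_star delta_star) t_star ->
      Risk h t muc = Risk h t_star muc.

Proof.
move=> eps0 loss0 lcvx intc intC uniq supst dst opt cond.
have [[t0 argt0] _] := uniq mup_star delta_star supst dst.
suff [mu [smu am]] : exists mu : probability (sample X) R,
    supported_in mu C /\ is_argmin Theta (pobj loss muc mu eps) t0.
  exists mu; split => // t ts at_ ats.
  have -> : ts = t0 := (uniq mup_star delta_star supst dst).2 _ _ ats argt0.
  have -> // : t = t0.
  by apply: (uniq mu eps smu _).2 => //; rewrite eps0 lexx.
have [Ed|Nd] := eqVneq delta_star eps.
  by exists mup_star; rewrite -Ed.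
have [d0 dle] := andP dst.
have dlt : delta_star < eps by rewrite lt_neqAle Nd.
have epsp : 0 < eps by apply: le_lt_trans dlt.
have [Tt0 mint0] := argt0.
have G : forall th, Theta th ->
    Lr loss muc t0 + delta_star * Lr loss mup_star t0 <=
    Lr loss muc th + delta_star * Lr loss mup_star th.
  move=> th Tth; have := mint0 th Tth.
  by rewrite !pobjE // ?lee_fin //; apply: intC.
case: cond => [smuc | [cvxT gz]].
-
  set c := (1 + eps) / (1 + delta_star).
  have dp : 0 < 1 + delta_star by lra.
  have cE : c * (1 + delta_star) = 1 + eps.
    by rewrite /c mulrVK // unitfE gt_eqF.
  have c1 : 1 <= c by rewrite /c ler_pdivlMr // mul1r; lra.
  have cle : c <= 1 + eps by rewrite /c ler_pdivrMr //; nra.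
  set a := 1 - (c - 1) / eps.
  have epsn : eps != 0 by rewrite gt_eqF.
  have ea : eps * (1 - a) = c - 1 by rewrite /a opprB addrC subrK mulrC mulfVK.
  have a01 : 0 <= a <= 1.
    apply/andP; split.
      by rewrite /a subr_ge0 ler_pdivrMr // mul1r; lra.
    by rewrite /a lerBlDr lerDl divr_ge0 //; lra.
  have cp : 0 < c by lra.
  have ea2 : eps * a = c * delta_star.
    have : eps * a = eps - eps * (1 - a) by ring.
    rewrite ea => ->; lra.
  exists (pmix mup_star muc a01); split; first exact: supported_pmix.
  split => // th Tth.
  have sm := supported_pmix a01 supst smuc.
  rewrite !pobjE ?lee_fin; try exact: intC.
  rewrite !(Lr_pmix loss0); try exact: intC.
  have E : forall x y : R, x + eps * (a * y + (1 - a) * x) = c * (x + delta_star * y).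
    move=> x y; rewrite mulrDr !mulrA ea2 ea; ring.
  rewrite !E ler_pM2l //.
  exact: G.
-
  have [nu [snu gnu]] := gz t0 Tt0.
  set a := delta_star / eps.
  have epsn : eps != 0 by rewrite gt_eqF.
  have a01 : 0 <= a <= 1.
    apply/andP; split; first by rewrite /a divr_ge0.
    by rewrite /a ler_pdivrMr // mul1r.
  have ea : eps * a = delta_star by rewrite /a mulrC mulfVK.
  have ea1 : eps * (1 - a) = eps - delta_star by rewrite mulrBr mulr1 ea.
  have inu := fun th => intC nu th snu.
  have nmin : forall th, Lr loss nu t0 <= Lr loss nu th.
    move=> th; case: gnu => dif d0'.
    apply: (@convex_min R V (Lr loss nu) t0 th _ dif d0'). move=> a0 b0 s0 hs0. exact: (Lr_convex lcvx inu).
  exists (pmix mup_star nu a01); split; first exact: supported_pmix.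
  split => // th Tth.
  have sm := supported_pmix a01 supst snu.
  rewrite !pobjE ?lee_fin; try exact: intC.
  rewrite !(Lr_pmix loss0) //; try exact: intC.
  have E : forall x y z : R, x + eps * (a * y + (1 - a) * z) =
      x + delta_star * y + (eps - delta_star) * z.
    move=> x y z; have -> : eps * (a * y + (1 - a) * z) = (eps * a) * y + (eps * (1 - a)) * z by ring. by rewrite ea ea1 addrA.
  rewrite !E.
  have h1 := G th Tth.
  have h2 : (eps - delta_star) * Lr loss nu t0 <= (eps - delta_star) * Lr loss nu th.
    by apply: ler_wpM2l; [lra | exact: nmin].
  lra.
all: exact: intc.
Qed.
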